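(* Let $E$ be a real Hilbert space with $\dim(E)\ge2$, $h\in E$ a unit vector, and $f:\mathbb{R}_{\ge0}\to\mathbb{R}_{\ge0}$ with $f(d)=0$ iff $d=0$. Let $x\preceq_f y\iff f(\|y_\perp-x_\perp\|)\le y_h-x_h$, and assume $(E,\preceq_f)$ is a sponge. Then $f(d)+f(e)\le\max(f(d+e),f(|d-e|))$ for all $d,e\in\mathbb{R}_{\ge0}$. If $\dim(E)\ge3$, then $f$ is square-superadditive, i.e. $f(\sqrt{d^2+e^2})\ge f(d)+f(e)$ for all $d,e\ge0$.
   Context: For $x\in E$ write $x=x_h h+x_\perp$ with $x_h=(x,h)$ and $x_\perp$ orthogonal to $h$. An oriented set $(S,\preceq)$ (with $\preceq$ reflexive and antisymmetric) is a sponge if every finite, nonempty, right-bounded subset has a join and every finite, nonempty, left-bounded subset has a meet. Here $P$ is right-bounded if some $s$ has $p\preceq s$ for all $p\in P$; the join of $P$ is an $x$ with $p\preceq x$ for all $p\in P$ and $x\preceq y$ whenever $p\preceq y$ for all $p\in P$; left-bounded and meet are defined dually. *)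

(* Defs.v *)
From HB Require Import structures.
From mathcomp Require Import all_boot all_order all_algebra.
From mathcomp Require Import reals.
Set Implicit Arguments. Unset Strict Implicit. Unset Printing Implicit Defensive.
Import Order.TTheory GRing.Theory Num.Theory.
Local Open Scope ring_scope.

Definition inner_product (R : realType) (E : lmodType R) (ip : E -> E -> R) : Prop :=
  [/\ (forall x y, ip x y = ip y x),
      (forall (a : R) (x y z : E), ip (a *: x + y) z = a * ip x z + ip y z),
      (forall x, 0 <= ip x x) &
      (forall x, ip x x = 0 -> x = 0)].

Definition ipnorm (R : realType) (E : lmodType R) (ip : E -> E -> R) (x : E) : R :=
  Num.sqrt (ip x x).

Definition ip_complete (R : realType) (E : lmodType R) (ip : E -> E -> R) : Prop :=
  forall u : nat -> E,
    (forall eps : R, 0 < eps -> exists N : nat, forall m n : nat,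
        (N <= m)%N -> (N <= n)%N -> ipnorm ip (u m - u n) < eps) ->
    exists l : E, forall eps : R, 0 < eps -> exists N : nat, forall n : nat,
        (N <= n)%N -> ipnorm ip (u n - l) < eps.

Definition hilbert (R : realType) (E : lmodType R) (ip : E -> E -> R) : Prop :=
  inner_product ip /\ ip_complete ip.

Definition dim_ge2 (R : realType) (E : lmodType R) (ip : E -> E -> R) : Prop :=
  exists u v : E, [/\ ip u u = 1, ip v v = 1 & ip u v = 0].
Definition dim_ge3 (R : realType) (E : lmodType R) (ip : E -> E -> R) : Prop :=
  exists u v w : E, [/\ ip u u = 1, ip v v = 1 & ip w w = 1] /\
                        [/\ ip u v = 0, ip u w = 0 & ip v w = 0].

Definition hcomp (R : realType) (E : lmodType R) (ip : E -> E -> R) (h x : E) : R :=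
  ip x h.
Definition perp (R : realType) (E : lmodType R) (ip : E -> E -> R) (h x : E) : E :=
  x - hcomp ip h x *: h.

Definition fle (R : realType) (E : lmodType R) (ip : E -> E -> R) (h : E)
  (f : R -> R) (x y : E) : Prop :=
  f (ipnorm ip (perp ip h y - perp ip h x)) <= hcomp ip h y - hcomp ip h x.

(* Oriented sets and sponges; finite subsets are represented by sequences. *)
Definition oriented (T : Type) (le : T -> T -> Prop) : Prop :=
  (forall x, le x x) /\ (forall x y, le x y -> le y x -> x = y).

Definition right_bounded (T : eqType) (le : T -> T -> Prop) (P : seq T) : Prop :=
  exists s, forall p, p \in P -> le p s.
Definition left_bounded (T : eqType) (le : T -> T -> Prop) (P : seq T) : Prop :=
  exists s, forall p, p \in P -> le s p.
Definition has_join (T : eqType) (le : T -> T -> Prop) (P : seq T) : Prop :=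
  exists x, (forall p, p \in P -> le p x) /\
            (forall y, (forall p, p \in P -> le p y) -> le x y).
Definition has_meet (T : eqType) (le : T -> T -> Prop) (P : seq T) : Prop :=
  exists x, (forall p, p \in P -> le x p) /\
            (forall y, (forall p, p \in P -> le y p) -> le y x).

Definition sponge (T : eqType) (le : T -> T -> Prop) : Prop :=
  [/\ oriented le,
      (forall P : seq T, P != [::] -> right_bounded le P -> has_join le P) &
      (forall P : seq T, P != [::] -> left_bounded le P -> has_meet le P)].

(* Main.v *)
Require Import Defs.
From HB Require Import structures.
From mathcomp Require Import all_boot all_order all_algebra.
From mathcomp Require Import reals.
From mathcomp Require Import ring lra.
Import Order.TTheory GRing.Theory Num.Theory.
Local Open Scope ring_scope.

Section Core.
Variables (R : realType) (E : lmodType R) (ip : E -> E -> R).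
Hypothesis Hip : inner_product ip.

Lemma ipC x y : ip x y = ip y x. Proof. by case: Hip. Qed.
Lemma ipDZ a x y z : ip (a*:x+y) z = a * ip x z + ip y z. Proof. by case: Hip. Qed.
Lemma ip0 z : ip 0 z = 0.
Proof. have := ipDZ 1 0 0 z; rewrite scaler0 addr0 mul1r => H; lra. Qed.
Lemma ipD x y z : ip (x+y) z = ip x z + ip y z.
Proof. by have := ipDZ 1 x y z; rewrite scale1r mul1r. Qed.
Lemma ipZ a x z : ip (a*:x) z = a * ip x z.
Proof. by have := ipDZ a x 0 z; rewrite !addr0 ip0 addr0. Qed.
Lemma ipN x z : ip (-x) z = - ip x z.
Proof. by rewrite -scaleN1r ipZ mulN1r. Qed.
Lemma ipDr x y z : ip z (x+y) = ip z x + ip z y.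
Proof. by rewrite ipC ipD !(ipC z). Qed.
Lemma ipZr a x z : ip z (a*:x) = a * ip z x.
Proof. by rewrite ipC ipZ (ipC z). Qed.
Lemma ipNr x z : ip z (-x) = - ip z x.
Proof. by rewrite ipC ipN (ipC z). Qed.
Lemma ip0r z : ip z 0 = 0.
Proof. by rewrite ipC ip0. Qed.

Lemma nN x : ipnorm ip (-x) = ipnorm ip x.
Proof. by rewrite /ipnorm ipN ipNr opprK. Qed.

Lemma core h f (Hh : ip h h = 1) (f0 : forall d, 0 <= d -> 0 <= f d)
  (fz : forall d, 0 <= d -> (f d = 0 <-> d = 0)) (Hs : sponge (fle ip h f))
  U W : ip U h = 0 -> ip W h = 0 ->
  f (ipnorm ip W) + f (ipnorm ip U) <=
    Num.max (f (ipnorm ip (W - U))) (f (ipnorm ip (W + U))).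
Proof.
move=> HU HW.
case: Hs => _ Hj _.
have Hdec : forall x t, ip x h = 0 -> hcomp ip h (x + t*:h) = t /\ perp ip h (x + t*:h) = x.
  move=> x t Hx; rewrite /perp /hcomp ipD ipZ Hx Hh add0r mulr1; split=> //.
  by rewrite addrK.
have Hdec0 : forall x, ip x h = 0 -> hcomp ip h x = 0 /\ perp ip h x = x.
  by move=> x Hx; have := Hdec x 0 Hx; rewrite scale0r addr0.
have UN : ip (-U) h = 0 by rewrite ipN HU oppr0.
have [hU pU] := Hdec0 U HU.
have [hNU pNU] := Hdec0 _ UN.
have Pne : [:: U; -U] != [::] by [].
have Pb : right_bounded (fle ip h f) [:: U; -U].
  have [h1 p1] := Hdec 0 (f (ipnorm ip U)) (ip0 h).
  exists (0 + f (ipnorm ip U) *: h) => p; rewrite !inE => /orP [] /eqP ->;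
    rewrite /fle h1 p1 ?hU ?pU ?hNU ?pNU sub0r ?opprK ?nN subr0 lexx //.
have [j [jub jl]] := Hj _ Pne Pb.
have pjh : ip (perp ip h j) h = 0.
  by rewrite /perp ipD ipN ipZ Hh mulr1 /hcomp subrr.
have [hs ps] := Hdec (- perp ip h j) (hcomp ip h j) ltac:(by rewrite ipN pjh oppr0).
have sub : forall p, p \in [:: U; -U] ->
    fle ip h f p (- perp ip h j + hcomp ip h j *: h).
  move=> p; rewrite !inE => /orP [] /eqP ->; rewrite /fle hs ps.
    have := jub (-U); rewrite !inE eqxx orbT => /(_ isT).
    by rewrite /fle hNU pNU hU pU opprK -opprD nN.
  have := jub U; rewrite !inE eqxx /= => /(_ isT).
  have e : forall a b : E, -a - -b = -(a - b) by move=> a b; rewrite opprD.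
  by rewrite /fle hNU pNU hU pU e nN.
have := jl _ sub; rewrite /fle hs ps subrr -opprD nN => Hle.
have Hf0 : f (ipnorm ip (perp ip h j + perp ip h j)) = 0.
  have := f0 _ (sqrtr_ge0 (ip (perp ip h j + perp ip h j) (perp ip h j + perp ip h j))).
  rewrite /ipnorm in Hle *; lra.
have dbl : forall x : E, ipnorm ip (x + x) = 0 -> x = 0.
  move=> x /eqP; rewrite /ipnorm sqrtr_eq0 !ipD !ipDr => H4.
  case: Hip => _ _ Hge Hz; apply: Hz; have := Hge x; lra.
have pj0 : perp ip h j = 0 by apply: dbl; apply: (fz _ (sqrtr_ge0 _)).1.
pose t := Num.max (f (ipnorm ip (W - U))) (f (ipnorm ip (W + U))).
have [hz pz] := Hdec W t HW.
have zub : forall p, p \in [:: U; -U] -> fle ip h f p (W + t *: h).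
  move=> p; rewrite !inE => /orP [] /eqP ->; rewrite /fle hz pz ?hU ?pU ?hNU ?pNU subr0
    ?opprK /t le_max lexx ?orbT //.
have := jl _ zub; rewrite /fle hz pz pj0 subr0 => H1.
have := jub U; rewrite !inE eqxx /= => /(_ isT).
rewrite /fle pj0 hU pU sub0r nN subr0 => H2.
rewrite -/t; lra.
Qed.

Lemma norm_sc n a : ip n n = 1 -> ipnorm ip (a *: n) = `|a|.
Proof. by move=> Hn; rewrite /ipnorm ipZ ipZr Hn mulr1 -expr2 sqrtr_sqr. Qed.

Lemma norm_comb n m a b : ip n n = 1 -> ip m m = 1 -> ip n m = 0 ->
  ipnorm ip (a *: n + b *: m) = Num.sqrt (a ^+ 2 + b ^+ 2).
Proof.
move=> Hn Hm Hnm; have Hmn : ip m n = 0 by rewrite ipC.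
rewrite /ipnorm !(ipD, ipDr, ipZ, ipZr) Hn Hm Hnm Hmn; congr (Num.sqrt _); ring.
Qed.

Lemma normalize p : 0 < ip p p -> exists k : R, ip (k *: p) (k *: p) = 1.
Proof.
move=> Hp; exists (Num.sqrt (ip p p))^-1; rewrite ipZ ipZr.
have s0 : Num.sqrt (ip p p) != 0 by rewrite gt_eqF // sqrtr_gt0.
rewrite -{3}(sqr_sqrtr (ltW Hp)); field; exact s0.
Qed.

End Core.
Arguments ipC {R E ip}. Arguments ipD {R E ip}. Arguments ipZ {R E ip}. Arguments ipN {R E ip}.
Arguments ipDr {R E ip}. Arguments ipZr {R E ip}. Arguments ipNr {R E ip}.
Arguments core {R E ip}. Arguments norm_sc {R E ip}. Arguments norm_comb {R E ip}. Arguments normalize {R E ip}.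

Theorem mainTheorem15 (R : realType) (E : lmodType R) (ip : E -> E -> R)
  (h : E) (f : R -> R) :
  hilbert ip -> dim_ge2 ip -> ip h h = 1 ->
  (forall d, 0 <= d -> 0 <= f d) ->
  (forall d, 0 <= d -> (f d = 0 <-> d = 0)) ->
  sponge (fle ip h f) ->
  (forall d e : R, 0 <= d -> 0 <= e ->
     f d + f e <= Num.max (f (d + e)) (f `|d - e|)) /\
  (dim_ge3 ip ->
   forall d e : R, 0 <= d -> 0 <= e ->
     f d + f e <= f (Num.sqrt (d ^+ 2 + e ^+ 2))).
Proof.
move=> [Hip _] [u [v [Hu Hv Huv]]] Hh f0 fz Hs.
have Hvu : ip v u = 0 by rewrite ipC.
split.
- have [n [Hn Hnh]] : exists n, ip n n = 1 /\ ip n h = 0.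
    have [a0|a0] := eqVneq (ip u h) 0; first by exists u.
    pose p := ip v h *: u - ip u h *: v.
    have pp : ip p p = ip v h ^+ 2 + ip u h ^+ 2.
      rewrite /p !(ipD Hip, ipDr Hip, ipZ Hip, ipZr Hip, ipN Hip, ipNr Hip) Hu Hv Huv Hvu.
      ring.
    have ph : ip p h = 0.
      rewrite /p !(ipD Hip, ipZ Hip, ipN Hip); ring.
    have Hp : 0 < ip p p.
      rewrite pp; have : 0 < ip u h ^+ 2 by rewrite exprn_even_gt0 // a0.
      have := sqr_ge0 (ip v h); lra.
    have [k Hk] := normalize Hip _ Hp.
    by exists (k *: p); split=> //; rewrite (ipZ Hip) ph mulr0.
  move=> d e d0 e0.
  have := core Hip h f Hh f0 fz Hs (d *: n) (e *: n).
  rewrite !(ipZ Hip) Hnh !mulr0 => /(_ erefl erefl).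
  rewrite -scalerBl -scalerDl !(norm_sc Hip) // (ger0_norm d0) (ger0_norm e0).
  rewrite (ger0_norm (addr_ge0 e0 d0)) => H; rewrite addrC maxC distrC (addrC d e); exact H.
- move=> [u' [v' [w' [[Hu' Hv' Hw'] [Huv' Huw' Hvw']]]]] d e d0 e0.
  have [n [m [Hn Hm Hnm Hnh Hmh]]] :
      exists n m, [/\ ip n n = 1, ip m m = 1, ip n m = 0, ip n h = 0 & ip m h = 0].
    have Hvu' : ip v' u' = 0 by rewrite ipC.
    have Hwu' : ip w' u' = 0 by rewrite ipC.
    have Hwv' : ip w' v' = 0 by rewrite ipC.
    have build : 0 < ip u' h ^+ 2 + ip v' h ^+ 2 ->
      exists n m, [/\ ip n n = 1, ip m m = 1, ip n m = 0, ip n h = 0 & ip m h = 0].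
      move=> HK.
      pose p := ip v' h *: u' - ip u' h *: v'.
      pose q := (ip u' h * ip w' h) *: u' + (ip v' h * ip w' h) *: v'
                - (ip u' h ^+ 2 + ip v' h ^+ 2) *: w'.
      have pp : ip p p = ip u' h ^+ 2 + ip v' h ^+ 2.
        rewrite /p !(ipD Hip, ipDr Hip, ipZ Hip, ipZr Hip, ipN Hip, ipNr Hip).
        rewrite ?Hu' ?Hv' ?Hw' ?Huv' ?Huw' ?Hvw' ?Hvu' ?Hwu' ?Hwv'; ring.
      have qq : ip q q = (ip u' h * ip w' h) ^+ 2 + (ip v' h * ip w' h) ^+ 2
                         + (ip u' h ^+ 2 + ip v' h ^+ 2) ^+ 2.
        rewrite /q !(ipD Hip, ipDr Hip, ipZ Hip, ipZr Hip, ipN Hip, ipNr Hip).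
        rewrite ?Hu' ?Hv' ?Hw' ?Huv' ?Huw' ?Hvw' ?Hvu' ?Hwu' ?Hwv'; ring.
      have pq : ip p q = 0.
        rewrite /p /q !(ipD Hip, ipDr Hip, ipZ Hip, ipZr Hip, ipN Hip, ipNr Hip).
        rewrite ?Hu' ?Hv' ?Hw' ?Huv' ?Huw' ?Hvw' ?Hvu' ?Hwu' ?Hwv'; ring.
      have ph : ip p h = 0.
        rewrite /p !(ipD Hip, ipZ Hip, ipN Hip); ring.
      have qh : ip q h = 0.
        rewrite /q !(ipD Hip, ipZ Hip, ipN Hip); ring.
      have Hp : 0 < ip p p by rewrite pp.
      have Hq : 0 < ip q q.
        rewrite qq; have := exprn_gt0 2 HK.
        have := sqr_ge0 (ip u' h * ip w' h); have := sqr_ge0 (ip v' h * ip w' h); lra.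
      have [k1 Hk1] := normalize Hip _ Hp.
      have [k2 Hk2] := normalize Hip _ Hq.
      exists (k1 *: p), (k2 *: q); split => //;
        by rewrite ?(ipZ Hip) ?(ipZr Hip) ?pq ?ph ?qh ?mulr0.
    have [a0|a0] := eqVneq (ip u' h) 0.
      have [b0|b0] := eqVneq (ip v' h) 0.
        by exists u', v'.
      set K := ip u' h ^+ 2 + ip v' h ^+ 2.
      have HK : 0 < K.
        rewrite /K; have : 0 < ip v' h ^+ 2 by rewrite exprn_even_gt0 // b0.
        have := sqr_ge0 (ip u' h); lra.
      exact: build.
    set K := ip u' h ^+ 2 + ip v' h ^+ 2.
    have HK : 0 < K.
      rewrite /K; have : 0 < ip u' h ^+ 2 by rewrite exprn_even_gt0 // a0.
      have := sqr_ge0 (ip v' h); lra.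
    exact: build.
  have := core Hip h f Hh f0 fz Hs (d *: n) (e *: m).
  rewrite !(ipZ Hip) Hnh Hmh !mulr0 => /(_ erefl erefl) H.
  have e1 : e *: m - d *: n = (-d) *: n + e *: m by rewrite scaleNr addrC.
  have e2 : e *: m + d *: n = d *: n + e *: m by rewrite addrC.
  move: H; rewrite e1 e2 !(norm_sc Hip) // !(norm_comb Hip) // sqrrN maxxx.
  by rewrite (ger0_norm d0) (ger0_norm e0) addrC.
Qed.
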